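(* Let $p$ be an odd prime and let $k,n$ be positive integers. If either $k\equiv n\equiv 0\pmod{p-1}$ or $k\equiv n\equiv 1\pmod{p-1}$, then \[ B^{(-k)}_{n}\equiv 2\pmod p. \]
   Context: For any integer $k$, let $\mathrm{Li}_k(t)=\sum_{n=1}^{\infty} t^n/n^k$. The poly-Bernoulli numbers $B^{(k)}_n$ ($n\ge 0$) are defined by $\frac{\mathrm{Li}_k(1-e^{-t})}{1-e^{-t}}=\sum_{n=0}^{\infty}B^{(k)}_n\frac{t^n}{n!}$. For negative upper index these are integers. *)

(* Defs.v *)
From HB Require Import structures.
From mathcomp Require Import all_boot all_order all_algebra.
Set Implicit Arguments. Unset Strict Implicit. Unset Printing Implicit Defensive.
Import Order.TTheory GRing.Theory Num.Theory.
Local Open Scope ring_scope.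

Definition exp_neg_trunc (N : nat) : {poly rat} :=
  \sum_(i < N.+1) (((-1) ^+ i) / (i`!)%:R) *: 'X^i.

(* Poly-Bernoulli numbers B_n^{(k)} for any integer k, read off from the
   generating function
     Li_k(1-e^{-t}) / (1-e^{-t}) = sum_{m>=0} (1-e^{-t})^m / (m+1)^k
                                = sum_n B_n^{(k)} t^n / n!.
   Since (1-e^{-t})^m has order >= m in t, only m <= n contribute to the
   coefficient of t^n, and e^{-t} may be truncated at order n. *)
Definition polyBern (k : int) (n : nat) : rat :=
  (n`!)%:R *
  (\sum_(m < n.+1) (((m.+1)%:R : rat) ^ (- k)) *: (1 - exp_neg_trunc n) ^+ m)`_n.

(* Main.v *)
Require Import Defs.
From HB Require Import structures.
From mathcomp Require Import all_boot all_order all_algebra finfield.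
From mathcomp Require Import ring lra zify.
Import Order.TTheory GRing.Theory Num.Theory.
Local Open Scope ring_scope.

Definition dd (R : comNzRingType) (m n : nat) : R :=
  \sum_(j < m.+1) ('C(m, j)%:R * (-1) ^+ j * (j%:R) ^+ n).

Lemma ddE (R : comNzRingType) m n M : (m < M)%N ->
  dd R m n = \sum_(j < M) ('C(m, j)%:R * (-1) ^+ j * (j%:R) ^+ n).
Proof.
move=> hM; rewrite /dd -(subnKC hM) big_split_ord /=.
rewrite [X in _ + X]big1 ?addr0 // => i _.
by rewrite bin_small ?mul0r // ltnS leq_addr.
Qed.

Lemma ddS (R : comNzRingType) m n :
  dd R m.+1 n.+1 = (m.+1)%:R * (dd R m.+1 n - dd R m n).
Proof.
rewrite (ddE R m.+1 n.+1 _ (ltnSn m.+1)) (ddE R m.+1 n _ (ltnSn m.+1)).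
rewrite (ddE R m n _ (ltnW (ltnSn m.+1))) -sumrB [in LHS]big_ord_recl [in RHS]big_ord_recl /=.
rewrite !bin0 subrr !expr0 !mulr1 mul1r !expr0n /= !add0r.
rewrite mulr_sumr; apply: eq_bigr => i _.
rewrite /bump /= !add1n.
have e : 'C(m.+1, i.+1)%:R - 'C(m, i.+1)%:R = 'C(m, i)%:R :> R.
  by rewrite binS addnC natrD addrK.
rewrite -!mulrBl e !mulrA -natrM (mul_bin_diag m.+1 i) natrM /=.
have H : forall a b c y : R, a * b * (y * c) = c * a * b * y by move=> *; ring.
by rewrite (exprSr (i.+1%:R) n); apply: H.
Qed.

Lemma dd0 (R : comNzRingType) m : dd R m 0 = (m == 0%N)%:R.
Proof.
rewrite /dd; transitivity ((1 - 1 : R) ^+ m); last by rewrite subrr expr0n.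
rewrite exprBn; apply: eq_bigr => i _.
by rewrite !expr1n !mulr1 ?expr0 ?mulr1 mulr_natl.
Qed.

Lemma dd_gt (R : comNzRingType) n m : (n < m)%N -> dd R m n = 0.
Proof.
elim: n m => [|n IH] [|m] //= h.
  by rewrite dd0.
by rewrite ddS !IH ?subrr ?mulr0 // ltnW.
Qed.

Lemma dd_p (R : comNzRingType) (p : nat) n m : (0 < p)%N -> (p%:R : R) = 0 ->
  (p <= m)%N -> dd R m n = 0.
Proof.
move=> p0 hp; elim: n m => [|n IH] [|m] //= h.
- by move: (leq_trans p0 h).
- by rewrite dd0.
- by move: (leq_trans p0 h).
rewrite ddS; case: (eqVneq m.+1 p) => [e|ne]; first by rewrite e hp mul0r.
have hm : (p <= m)%N by rewrite -ltnS ltn_neqAle eq_sym ne h.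
by rewrite !IH ?subrr ?mulr0 // ltnW.
Qed.

Lemma dd1 (R : comNzRingType) m : dd R m 1 = - (m == 1%N)%:R.
Proof.
case: m => [|m]; first by rewrite /dd big_ord_recl big_ord0 expr1 /= mulr0 addr0 oppr0.
rewrite ddS !dd0 /=; case: m => [|m] /=; first by rewrite sub0r mul1r.
by rewrite subr0 mulr0 oppr0.
Qed.

Lemma coefE1 N i : (i <= N)%N -> (exp_neg_trunc N)`_i = (-1) ^+ i / (i`!)%:R.
Proof.
move=> h; rewrite /exp_neg_trunc -(poly_def N.+1 (fun i => (-1) ^+ i / (i`!)%:R)).
by rewrite coef_poly ltnS h.
Qed.

Lemma coefE N j i : (i <= N)%N ->
  ((exp_neg_trunc N) ^+ j)`_i = (- (j%:R)) ^+ i / (i`!)%:R.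
Proof.
elim: j i => [|j IH] i hi.
  rewrite expr0 coef1 oppr0 expr0n; case: i hi => [|i] _ //=.
  by rewrite mul0r.
rewrite exprSr coefM.
have -> : (- (j.+1%:R)) ^+ i = ((-1 : rat) + - (j%:R)) ^+ i
  by rewrite -opprD addrC -natr1 addrC.
rewrite exprDn mulr_suml; apply: eq_bigr => l _.
have hl : (l <= i)%N by rewrite -ltnS.
rewrite IH ?(leq_trans hl hi) // coefE1 ?(leq_trans (leq_subr _ _) hi) //.
have hf := bin_fact hl.
have -> : (i`!)%:R = ('C(i, l)%:R * ((l`!)%:R * ((i - l)`!)%:R) : rat)
  by rewrite -!natrM hf.
move: ((- (j%:R : rat)) ^+ l) ((-1 : rat) ^+ (i - l)) => a b.
have f1 : (l`!)%:R != 0 :> rat by rewrite pnatr_eq0 -lt0n fact_gt0.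
have f2 : ((i - l)`!)%:R != 0 :> rat by rewrite pnatr_eq0 -lt0n fact_gt0.
have f3 : ('C(i, l))%:R != 0 :> rat by rewrite pnatr_eq0 -lt0n bin_gt0.
rewrite -mulr_natr; field.
by rewrite f1 f2 f3.
Qed.

Definition Zr (R : comNzRingType) (k n : nat) : R :=
  (-1) ^+ n * \sum_(m < n.+1) ((m.+1)%:R ^+ k * dd R m n).

Lemma polyBernE k n : polyBern (- (k%:Z)) n = Zr rat k n.
Proof.
rewrite /polyBern /Zr opprK coef_sum mulr_sumr mulr_sumr; apply: eq_bigr => m _.
rewrite coefZ /= -exprnP.
rewrite mulrCA [RHS]mulrCA; congr (_ * _).
rewrite exprBn coef_sum /dd !mulr_sumr.
apply: eq_bigr => j _.
rewrite coefMn expr1n mulr1 -(rmorphN1 (@polyC rat)) -rmorphXn coefCM.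
rewrite coefE // exprNn.
have f : (n`!)%:R != 0 :> rat by rewrite pnatr_eq0 -lt0n fact_gt0.
move: f; move: ((n`!)%:R : rat) => a f; move: f; move: a ((-1 : rat) ^+ n) ((-1 : rat) ^+ j) ((j%:R : rat) ^+ n) => a b c d f.
rewrite -(mulr_natl (c * (b * d / a))); move: ('C(m, j)%:R : rat) => g.
by field.
Qed.


Lemma dd_map (R S : comNzRingType) (f : {rmorphism R -> S}) m n :
  f (dd R m n) = dd S m n.
Proof.
rewrite /dd rmorph_sum; apply: eq_bigr => j _.
by rewrite !rmorphM !rmorphXn rmorphN1 !rmorph_nat.
Qed.

Lemma Zr_map (R S : comNzRingType) (f : {rmorphism R -> S}) k n :
  f (Zr R k n) = Zr S k n.
Proof.
rewrite /Zr rmorphM rmorphXn rmorphN1 rmorph_sum; congr (_ * _).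
apply: eq_bigr => m _.
by rewrite rmorphM rmorphXn rmorph_nat dd_map.
Qed.

Lemma Zr_int (R : comNzRingType) k n : (Zr int k n)%:~R = Zr R k n.
Proof. exact: (Zr_map _ _ (intr : {rmorphism int -> R}) k n). Qed.

Lemma fermat p (hp : prime p) (x : 'F_p) : x != 0 -> x ^+ p.-1 = 1.
Proof.
move=> x0; apply: (mulIf x0); rewrite /= mul1r -exprSr prednK ?prime_gt0 //.
have := expf_card x; by rewrite card_Fp.
Qed.

Lemma powmod p (hp : prime p) a b (x : 'F_p) : (0 < a)%N -> (0 < b)%N ->
  a = b %[mod p.-1] -> x ^+ a = x ^+ b.
Proof.
wlog hab : a b / (b <= a)%N.
  move=> H ha hb e; case: (leqP b a) => h; first exact: H.
  by symmetry; apply: H => //; apply: ltnW.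
move=> ha hb e; case: (eqVneq x 0) => [->|x0].
  by rewrite !expr0n !eqn0Ngt ha hb.
have /dvdnP [c hc] : (p.-1 %| a - b)%N by rewrite -eqn_mod_dvd // e.
by rewrite -(subnK hab) hc exprD mulnC exprM fermat // expr1n mul1r.
Qed.

Lemma natF0 p (hp : prime p) m : (0 < m)%N -> (m < p)%N -> (m%:R : 'F_p) != 0.
Proof.
move=> h0 h1; rewrite -(dvdn_pcharf (pchar_Fp hp)).
by apply/negP => /(dvdn_leq h0); rewrite leqNgt h1.
Qed.

Lemma ZrF p k n k' n' (hp : prime p) : (0 < k)%N -> (0 < n)%N -> (0 < k')%N -> (0 < n')%N ->
  k = k' %[mod p.-1] -> n = n' %[mod p.-1] -> odd n = odd n' ->
  Zr 'F_p k n = (-1) ^+ n' * \sum_(0 <= m < p.-1) ((m.+1)%:R ^+ k' * dd _ m n').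
Proof.
move=> k0 n0 k'0 n'0 ek en eo.
have p0 := prime_gt0 hp.
have hpF : (p%:R : 'F_p) = 0 := pcharf0 (pchar_Fp hp).
rewrite /Zr -signr_odd eo signr_odd; congr (_ * _).
set G := fun m : nat => (m.+1%:R ^+ k * dd 'F_p m n).
rewrite -(big_mkord xpredT G).
have E1 : \sum_(0 <= m < n + p) G m = \sum_(0 <= m < n.+1) G m.
  rewrite (@big_cat_nat _ _ _ n.+1 0 (n + p)) //=; last by rewrite -addn1 leq_add2l.
  rewrite [X in _ + X]big1_seq ?addr0 // => m; rewrite mem_index_iota => hm.
  have /andP[h1 h2] : (_ <= m)%N && (m < _)%N := hm.
  by rewrite /G dd_gt ?mulr0.
have E2 : \sum_(0 <= m < n + p) G m = \sum_(0 <= m < p.-1) G m.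
  rewrite (@big_cat_nat _ _ _ p.-1 0 (n + p)) //=; last by apply: (leq_trans (leq_pred p)); apply: leq_addl.
  rewrite [X in _ + X]big1_seq ?addr0 // => m; rewrite mem_index_iota => hm.
  have /andP[h1 h2] : (_ <= m)%N && (m < _)%N := hm.
  case: (eqVneq m p.-1) => [->|ne].
    by rewrite /G prednK // hpF expr0n eqn0Ngt k0 mul0r.
  by rewrite /G (dd_p _ p) ?mulr0 // -(prednK p0) ltn_neqAle eq_sym ne h1.
rewrite -E1 E2.
apply: eq_big_nat => m /andP[_ hm].
have hmp : (m < p)%N by apply: (leq_trans hm); rewrite leq_pred.
rewrite /G (powmod _ hp _ _ _ k0 k'0 ek); congr (_ * _).
rewrite /dd; apply: eq_bigr => j _.
by rewrite (powmod _ hp _ _ _ n0 n'0 en).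
Qed.

Lemma case1 p (hp : prime p) (op : odd p) :
  (-1) ^+ 1 * \sum_(0 <= m < p.-1) ((m.+1)%:R ^+ 1 * dd 'F_p m 1) = 2.
Proof.
case: p hp op => [|[|[|q]]] //= hp op.
rewrite big_nat_recl // big_nat_recl // big1_seq; last first.
  by move=> i _; rewrite dd1 /= oppr0 mulr0.
rewrite !dd1 /= oppr0 mulr0 add0r addr0 expr1 mulN1r.
by rewrite expr1 mulrN1 opprK.
Qed.

Lemma ddF_pm1 p (hp : prime p) m : (m < p.-1)%N ->
  dd 'F_p m p.-1 = (m == 0%N)%:R - 1.
Proof.
move=> hm; have p0 := prime_gt0 hp.
have hp1 : (0 < p.-1)%N by rewrite -ltnS prednK // prime_gt1.
rewrite -dd0 /dd big_ord_recl [in RHS]big_ord_recl /= expr0n eqn0Ngt hp1 /= mulr0 add0r.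
rewrite bin0 !expr0 !mulr1 addrC addKr; apply: eq_bigr => i _.
rewrite fermat // ?expr0 // natF0 //.
apply: (leq_trans _ (leq_pred p)); apply: leq_ltn_trans hm.
by rewrite /bump /= add1n (ltn_ord i).
Qed.

Lemma case0 p (hp : prime p) (op : odd p) :
  (-1) ^+ p.-1 * \sum_(0 <= m < p.-1) ((m.+1)%:R ^+ p.-1 * dd 'F_p m p.-1) = 2.
Proof.
have hpF : (p%:R : 'F_p) = 0 := pcharf0 (pchar_Fp hp).
have p0 := prime_gt0 hp.
have ev : ~~ odd p.-1 by move: op; rewrite -{1}(prednK p0) /=; case: (odd _).
rewrite -signr_odd (negbTE ev) expr0 mul1r.
rewrite (eq_big_nat _ _ (F2 := fun m => (m == 0%N)%:R - 1)); last first.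
  move=> m /andP[_ hm]; rewrite ddF_pm1 // fermat ?mul1r // natF0 //.
  by rewrite -(prednK p0) ltnS.
rewrite sumrB sumr_const_nat subn0.
have hp1 : (0 < p.-1)%N by rewrite -ltnS prednK // prime_gt1.
rewrite -(prednK hp1) big_nat_recl // big1_seq /=; last by move=> *.
have e : (p.-2.+1%:R : 'F_p) = -1.
  by apply/eqP; rewrite -addr_eq0 natr1 !prednK // hpF.
by rewrite e addr0 opprK -mulr2n.
Qed.

Lemma parity p n n' : odd p -> n = n' %[mod p.-1] -> odd n = odd n'.
Proof.
move=> op en.
have p0 : (0 < p)%N by rewrite lt0n; apply/negP => /eqP p0; rewrite p0 in op.
have d2 : (2 %| p.-1)%N by rewrite dvdn2; move: op; rewrite -{1}(prednK p0) /=; case: (odd _).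
have h : (n %% 2 = n' %% 2)%N by rewrite -(modn_dvdm n d2) -(modn_dvdm n' d2) en.
by move: h; rewrite !modn2; case: (odd n); case: (odd n').
Qed.

Lemma Fp_cong p (hp : prime p) (z : int) : (z%:~R : 'F_p) = 2 -> (z = 2 %[mod p%:Z])%Z.
Proof.
move=> hz; apply/eqP; rewrite eqz_mod_dvd dvdzE /= (dvdn_pcharf (pchar_Fp hp)).
have : ((z - 2)%:~R : 'F_p) = 0 by rewrite intrD hz intrN subrr.
case: (z - 2) => a /=; first by move=> h; by apply/eqP; rewrite -h pmulrn.
rewrite NegzE intrN => /eqP; rewrite oppr_eq0 => /eqP h; by apply/eqP; rewrite -h pmulrn.
Qed.

Theorem theorem3p4 (p k n : nat) :
  prime p -> odd p -> (0 < k)%N -> (0 < n)%N ->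
  ((k = 0 %[mod p.-1] /\ n = 0 %[mod p.-1]) \/
   (k = 1 %[mod p.-1] /\ n = 1 %[mod p.-1])) ->
  exists z : int, polyBern (- (k%:Z)) n = z%:~R /\ (z = 2 %[mod p%:Z])%Z.
Proof.
move=> hp op k0 n0 hc; exists (Zr int k n); split.
  by rewrite polyBernE Zr_int.
apply: (Fp_cong _ hp); rewrite Zr_int.
have p0 := prime_gt0 hp.
have hp1 : (0 < p.-1)%N by rewrite -ltnS prednK // prime_gt1.
case: hc => [[ek en]|[ek en]].
  have ek' : k = p.-1 %[mod p.-1] by rewrite ek modnn mod0n.
  have en' : n = p.-1 %[mod p.-1] by rewrite en modnn mod0n.
  rewrite (ZrF _ _ _ _ _ hp k0 n0 hp1 hp1 ek' en' (parity _ _ _ op en')).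
  exact: case0.
rewrite (ZrF _ _ _ 1 1 hp k0 n0 isT isT ek en (parity _ _ _ op en)).
exact: case1.
Qed.
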